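(* Every reflection point of $\mathrm{OPT}$ that is not a tip (endpoint) of a segment is a pure reflection point.
   Context: Instance: vertical line segments $s_1,\dots,s_n$ in $\mathbb{R}^2$, each of length $1$, with pairwise distinct $x$-coordinates. A tour is a cyclic sequence of points $p_1,\dots,p_\sigma$, each on some segment, with every segment containing at least one $p_j$; the straight segments joining consecutive points are legs; cost is total length. $\mathrm{OPT}$ is a fixed minimum-cost tour, oriented $p_1\to p_2\to\cdots$, with no two consecutive points on the same segment and not self-crossing. For a point $p_j$ of $\mathrm{OPT}$ on segment $s$, a leg incident to $p_j$ is to the left (right) of $s$ if it lies in $x\le x(s)$ (resp. $x\ge x(s)$); $p_j$ is a reflection point if both incident legs are to the left of $s$ or both are to the right of $s$. A reflection point $p_j$ on $s$ is a pure reflection point if the two legs incident to $p_j$ make the same angle with $s$. *)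

(* Defs.v *)
From Stdlib Require Export Reals Lra Lia.
Open Scope R_scope.

Definition point := (R * R)%type.

Definition on_seg (X Y : nat -> R) (i : nat) (q : point) : Prop :=
  fst q = X i /\ Y i <= snd q <= Y i + 1.

Definition is_tip (X Y : nat -> R) (i : nat) (q : point) : Prop :=
  q = (X i, Y i) \/ q = (X i, Y i + 1).

(* A tour is a cyclic sequence p 0, ..., p (sigma-1), indices taken mod sigma. *)
Definition nxt (sigma j : nat) : nat := ((j + 1) mod sigma)%nat.
Definition prv (sigma j : nat) : nat := ((j + sigma - 1) mod sigma)%nat.

Definition is_tour (n : nat) (X Y : nat -> R) (sigma : nat) (p : nat -> point)
  : Prop :=
  (0 < sigma)%nat /\
  (forall j, (j < sigma)%nat -> exists i, (i < n)%nat /\ on_seg X Y i (p j)) /\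
  (forall i, (i < n)%nat -> exists j, (j < sigma)%nat /\ on_seg X Y i (p j)).

Definition dist (a b : point) : R :=
  sqrt ((fst a - fst b) ^ 2 + (snd a - snd b) ^ 2).

Fixpoint sumR (f : nat -> R) (k : nat) : R :=
  match k with
  | O => 0
  | S k' => sumR f k' + f k'
  end.

Definition cost (sigma : nat) (p : nat -> point) : R :=
  sumR (fun j => dist (p j) (p (nxt sigma j))) sigma.

Definition orient (a b c : point) : R :=
  (fst b - fst a) * (snd c - snd a) - (snd b - snd a) * (fst c - fst a).

Definition proper_cross (a b c d : point) : Prop :=
  orient a b c * orient a b d < 0 /\ orient c d a * orient c d b < 0.

Definition not_self_crossing (sigma : nat) (p : nat -> point) : Prop :=
  forall j k, (j < sigma)%nat -> (k < sigma)%nat -> j <> k ->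
    nxt sigma j <> k -> nxt sigma k <> j ->
    ~ proper_cross (p j) (p (nxt sigma j)) (p k) (p (nxt sigma k)).

(* The leg from p j to q lies to the left (right) of segment i, i.e. in the
   half-plane x <= X i (x >= X i). Since p j lies on segment i, this only
   depends on the other endpoint q. *)
Definition leg_left (X : nat -> R) (i : nat) (a b : point) : Prop :=
  fst a <= X i /\ fst b <= X i.
Definition leg_right (X : nat -> R) (i : nat) (a b : point) : Prop :=
  X i <= fst a /\ X i <= fst b.

Definition is_reflection (X : nat -> R) (i sigma : nat) (p : nat -> point)
  (j : nat) : Prop :=
  (leg_left X i (p (prv sigma j)) (p j) /\ leg_left X i (p j) (p (nxt sigma j)))
  \/
  (leg_right X i (p (prv sigma j)) (p j) /\ leg_right X i (p j) (p (nxt sigma j))).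

(* The (non-oriented) angle in [0, pi/2] between the leg [a,b] and a vertical
   line (the supporting line of a segment). *)
Definition angle_with_vertical (a b : point) : R :=
  acos (Rabs (snd b - snd a) / dist a b).

Definition is_pure_reflection (X : nat -> R) (i sigma : nat)
  (p : nat -> point) (j : nat) : Prop :=
  is_reflection X i sigma p j /\
  angle_with_vertical (p j) (p (prv sigma j)) =
  angle_with_vertical (p j) (p (nxt sigma j)).

(* Main.v *)
Require Import Defs.
From Stdlib Require Import Reals.
From Stdlib Require Import Lra Lia.
From Coquelicot Require Import Coquelicot.
Open Scope R_scope.

Lemma der1 (c d y : R) : c <> 0 ->
  is_derive (fun t => sqrt (c ^ 2 + (d - t) ^ 2)) y ((y - d) / sqrt (c ^ 2 + (d - y) ^ 2)).
Proof.
  intro Hc. assert (H: 0 < c ^ 2 + (d - y) ^ 2).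
  { pose proof (pow2_gt_0 c Hc). pose proof (pow2_ge_0 (d-y)). lra. }
  auto_derive. lra.
  replace (c * (c * 1) + (d + - y) * ((d + - y) * 1)) with (c ^ 2 + (d - y) ^ 2) by ring.
  assert (0 < sqrt (c ^ 2 + (d - y) ^ 2)) by (apply sqrt_lt_R0; lra).
  field. lra.
Qed.

Lemma sqrt_pos_c (c d : R) : c <> 0 -> 0 < sqrt (c ^ 2 + d ^ 2).
Proof.
  intro Hc. apply sqrt_lt_R0.
  pose proof (pow2_gt_0 c Hc). pose proof (pow2_ge_0 d). lra.
Qed.

Lemma sumR_sub f g N : sumR (fun k => f k - g k) N = sumR f N - sumR g N.
Proof. induction N; simpl; [lra| rewrite IHN; lra]. Qed.

Lemma sumR_two (h : nat -> R) (a b : nat) : a <> b -> forall N,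
  (forall k, (k < N)%nat -> k <> a -> k <> b -> h k = 0) ->
  sumR h N = (if Nat.ltb a N then h a else 0) + (if Nat.ltb b N then h b else 0).
Proof.
  intros Hab N. induction N as [|N IH]; intros Hz; simpl.
  - lra.
  - rewrite IH by (intros; apply Hz; lia).
    destruct (Nat.ltb_spec a N), (Nat.ltb_spec b N), (Nat.ltb_spec a (S N)), (Nat.ltb_spec b (S N));
      try lia.
    all: try (assert (a = N) by lia; subst; lra).
    all: try (assert (b = N) by lia; subst; lra).
    all: rewrite (Hz N) by lia; lra.
Qed.

Lemma nxt_spec sigma k : (k < sigma)%nat ->
  ((k + 1 < sigma)%nat /\ nxt sigma k = (k + 1)%nat) \/ ((k + 1)%nat = sigma /\ nxt sigma k = 0%nat).
Proof.
  intro H. unfold nxt. destruct (Nat.eq_dec (k+1) sigma) as [e|e].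
  - right. split; auto. rewrite e. apply Nat.mod_same. lia.
  - left. split; [lia|]. apply Nat.mod_small. lia.
Qed.

Lemma prv_spec sigma j : (j < sigma)%nat ->
  ((1 <= j)%nat /\ prv sigma j = (j - 1)%nat) \/ (j = 0%nat /\ prv sigma j = (sigma - 1)%nat).
Proof.
  intro H. unfold prv. destruct j as [|j].
  - right. split; auto. apply Nat.mod_small. lia.
  - left. split; [lia|].
    replace (S j + sigma - 1)%nat with (j + 1 * sigma)%nat by lia.
    rewrite Nat.mod_add by lia. rewrite Nat.mod_small by lia. lia.
Qed.

Lemma Rabs_div_pos u d : 0 < d -> Rabs u / d = Rabs (u / d).
Proof.
  intro Hd. unfold Rdiv. rewrite Rabs_mult, Rabs_inv, (Rabs_pos_eq d); lra.
Qed.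

Theorem lemma2 (n : nat) (X Y : nat -> R)
  (Hdistinct : forall i k, (i < n)%nat -> (k < n)%nat -> i <> k -> X i <> X k)
  (sigma : nat) (p : nat -> point)
  (Htour : is_tour n X Y sigma p)
  (Hopt : forall sigma' p', is_tour n X Y sigma' p' ->
            cost sigma p <= cost sigma' p')
  (Hconsec : forall j i, (j < sigma)%nat -> (i < n)%nat ->
            on_seg X Y i (p j) -> ~ on_seg X Y i (p (nxt sigma j)))
  (Hnocross : not_self_crossing sigma p) :
  forall j i, (j < sigma)%nat -> (i < n)%nat ->
    on_seg X Y i (p j) ->
    is_reflection X i sigma p j ->
    ~ is_tip X Y i (p j) ->
    is_pure_reflection X i sigma p j.
Proof.
  intros j i Hj Hi Hon Hrefl Htip.
  pose proof Htour as [Hs [Hon_all Hcov]].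
  assert (Hsig : (2 <= sigma)%nat).
  { destruct (Nat.le_gt_cases 2 sigma) as [h|h]; [exact h|].
    exfalso. assert (sigma = 1%nat) by lia. subst.
    assert (j = 0%nat) by lia. subst.
    apply (Hconsec 0%nat i Hj Hi Hon). exact Hon. }
  set (pj := prv sigma j). set (nj := nxt sigma j).
  assert (Hpj : (pj < sigma)%nat /\ pj <> j /\ nxt sigma pj = j).
  { unfold pj. destruct (prv_spec sigma j Hj) as [[h1 h2]|[h1 h2]]; rewrite h2;
    (split; [lia| split; [lia|]]);
    destruct (nxt_spec sigma (prv sigma j)) as [[g1 g2]|[g1 g2]]; try lia;
    rewrite h2 in g1, g2; rewrite g2; lia. }
  destruct Hpj as [Hpj1 [Hpj2 Hpj3]].
  assert (Hnj : (nj < sigma)%nat /\ nj <> j).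
  { unfold nj. destruct (nxt_spec sigma j Hj) as [[h1 h2]|[h1 h2]]; rewrite h2; lia. }
  destruct Hnj as [Hnj1 Hnj2].
  assert (Hback : forall k, (k < sigma)%nat -> nxt sigma k = j -> k = pj).
  { intros k Hk e. unfold pj.
    destruct (prv_spec sigma j Hj) as [[h1 h2]|[h1 h2]]; rewrite h2;
    destruct (nxt_spec sigma k Hk) as [[g1 g2]|[g1 g2]]; lia. }
  set (a := p pj). set (b := p nj).
  assert (Hxa : fst a - X i <> 0).
  { destruct (Hon_all pj Hpj1) as [i' [Hi' Ho']].
    destruct (Nat.eq_dec i' i) as [e|e].
    - subst i'. exfalso. apply (Hconsec pj i Hpj1 Hi Ho'). rewrite Hpj3. exact Hon.
    - destruct Ho' as [Ho' _]. unfold a. rewrite Ho'. pose proof (Hdistinct i' i Hi' Hi e). lra. }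
  assert (Hxb : fst b - X i <> 0).
  { destruct (Hon_all nj Hnj1) as [i' [Hi' Ho']].
    destruct (Nat.eq_dec i' i) as [e|e].
    - subst i'. exfalso. apply (Hconsec j i Hj Hi Hon). exact Ho'.
    - destruct Ho' as [Ho' _]. unfold b. rewrite Ho'. pose proof (Hdistinct i' i Hi' Hi e). lra. }
  set (y := snd (p j)).
  assert (Hpjeq : p j = (X i, y)).
  { unfold y. destruct Hon as [Hf _]. destruct (p j) as [u v]. simpl in *. congruence. }
  assert (Hyr : Y i < y < Y i + 1).
  { destruct Hon as [_ [h1 h2]]. fold y in h1, h2.
    destruct (Req_dec y (Y i)) as [e|e].
    { exfalso. apply Htip. left. rewrite Hpjeq, e. reflexivity. }
    destruct (Req_dec y (Y i + 1)) as [e'|e'].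
    { exfalso. apply Htip. right. rewrite Hpjeq, e'. reflexivity. }
    lra. }
  set (G := fun t => sqrt ((fst a - X i) ^ 2 + (snd a - t) ^ 2) +
                     sqrt ((fst b - X i) ^ 2 + (snd b - t) ^ 2)).
  assert (HGd : forall t : R, Defs.dist a (X i, t) + Defs.dist (X i, t) b = G t).
  { intro t. unfold G, Defs.dist. simpl. f_equal; f_equal; ring. }
  assert (Hmin : forall t, Y i < t -> t < Y i + 1 -> G y <= G t).
  { intros t ht1 ht2.
    set (p' := fun k => if Nat.eq_dec k j then (X i, t) else p k).
    assert (Ht : is_tour n X Y sigma p').
    { split; [exact Hs| split].
      - intros k Hk. unfold p'. destruct (Nat.eq_dec k j).
        + exists i. split; [exact Hi|]. unfold on_seg; simpl; lra.
        + apply Hon_all; exact Hk.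
      - intros i' Hi'. destruct (Hcov i' Hi') as [k [Hk Ho]].
        destruct (Nat.eq_dec k j) as [e|e].
        + subst k. exists j. split; [exact Hj|].
          destruct (Nat.eq_dec i' i) as [e'|e'].
          * subst i'. unfold p'. destruct (Nat.eq_dec j j); [|congruence].
            unfold on_seg; simpl; lra.
          * exfalso. apply (Hdistinct i' i Hi' Hi e'). destruct Ho as [Ho _].
            destruct Hon as [Ho2 _]. congruence.
        + exists k. split; [exact Hk|]. unfold p'. destruct (Nat.eq_dec k j); [congruence|exact Ho]. }
    pose proof (Hopt sigma p' Ht) as Hc.
    assert (Hdiff : cost sigma p' - cost sigma p = G t - G y).
    { unfold cost. rewrite <- sumR_sub.
      rewrite (sumR_two _ j pj (not_eq_sym Hpj2) sigma).
      - destruct (Nat.ltb_spec j sigma); [|lia].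
        destruct (Nat.ltb_spec pj sigma); [|lia].
        rewrite <- (HGd t), <- (HGd y). rewrite <- Hpjeq.
        unfold p'. rewrite Hpj3.
        destruct (Nat.eq_dec j j); [|congruence].
        destruct (Nat.eq_dec (nxt sigma j) j) as [e0|e0]; [exfalso; apply Hnj2; exact e0|].
        destruct (Nat.eq_dec pj j); [congruence|].
        rewrite Hpjeq. fold nj a b. lra.
      - intros k Hk e1 e2. unfold p'.
        destruct (Nat.eq_dec k j); [congruence|].
        destruct (Nat.eq_dec (nxt sigma k) j) as [e|e].
        + exfalso. apply e2. apply Hback; assumption.
        + lra. }
    lra. }
  set (da := sqrt ((fst a - X i) ^ 2 + (snd a - y) ^ 2)).
  set (db := sqrt ((fst b - X i) ^ 2 + (snd b - y) ^ 2)).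
  assert (Hda : 0 < da) by (apply sqrt_pos_c; exact Hxa).
  assert (Hdb : 0 < db) by (apply sqrt_pos_c; exact Hxb).
  assert (HD : is_derive G y ((y - snd a) / da + (y - snd b) / db)).
  { apply (is_derive_plus (fun t => sqrt ((fst a - X i) ^ 2 + (snd a - t) ^ 2))
                          (fun t => sqrt ((fst b - X i) ^ 2 + (snd b - t) ^ 2)));
    apply der1; assumption. }
  apply is_derive_Reals in HD.
  set (pr := exist (fun l => derivable_pt_abs G y l) _ HD : derivable_pt G y).
  assert (H0 : derive_pt G y pr = 0).
  { apply (deriv_minimum G (Y i) (Y i + 1) y pr); try lra.
    intros t h1 h2. apply Hmin; assumption. }
  rewrite (derive_pt_eq_0 G y _ pr HD) in H0.
  split; [exact Hrefl|].
  unfold angle_with_vertical. rewrite Hpjeq. fold pj nj a b. f_equal.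
  assert (E1 : Defs.dist (X i, y) a = da) by (unfold Defs.dist, da; simpl; f_equal; ring).
  assert (E2 : Defs.dist (X i, y) b = db) by (unfold Defs.dist, db; simpl; f_equal; ring).
  rewrite E1, E2. simpl.
  rewrite (Rabs_div_pos _ _ Hda), (Rabs_div_pos _ _ Hdb).
  replace ((snd b - y) / db) with (- ((snd a - y) / da)).
  - apply eq_sym, Rabs_Ropp.
  - assert (((snd a - y) / da) = - ((y - snd a) / da)) by (field; lra).
    assert (((snd b - y) / db) = - ((y - snd b) / db)) by (field; lra).
    lra.
Qed.
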